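(* Let $f(x)=\sum_{n\ge 1} a_n \frac{x^n}{n!}$ be a formal power series with complex coefficients and $a_1\ne0$, and put $q:=a_1$. For all integers $s\ge 0$ and $n\ge k\ge 0$, \[ \begin{bmatrix} n\\ k\end{bmatrix}_{\phi^s}=\sum_{p=0}^{\min(s,n-k)}\ \sum_{k=j_0<j_1<\cdots<j_p=n} h_{s-p}\big(q^{j_0},\dots,q^{j_p}\big)\prod_{i=0}^{p-1}\begin{bmatrix} j_{i+1}\\ j_i\end{bmatrix}_{\phi}, \] where the inner sum is over strictly increasing integer tuples with $j_0=k$ and $j_p=n$, and \[ h_{s-p}(q^{j_0},\dots,q^{j_p})=\sum_{\substack{\lambda_0+\cdots+\lambda_p=s-p\\ \lambda_i\ge 0}} q^{j_0\lambda_0+\cdots+j_p\lambda_p}. \]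
   Context: For an integer $s\ge 0$, $f^s$ denotes the $s$-fold compositional iterate of $f$, with $f^0(x)=x$. For integers $n\ge k\ge 0$, $\begin{bmatrix} n\\ k\end{bmatrix}_{\phi^s}$ is defined by $\frac{f^s(x)^k}{k!}=\sum_{n\ge k}\begin{bmatrix} n\\ k\end{bmatrix}_{\phi^s}\frac{x^n}{n!}$, and $\begin{bmatrix} n\\ k\end{bmatrix}_{\phi}:=\begin{bmatrix} n\\ k\end{bmatrix}_{\phi^1}$ (the exponential partial Bell polynomial $B_{n,k}(a_1,\dots,a_{n-k+1})$). $h_m(x_0,\dots,x_p)$ denotes the complete homogeneous symmetric polynomial of degree $m$ in $x_0,\dots,x_p$. *)

(* Defs.v *)
From mathcomp Require Import all_boot all_order all_algebra.
From mathcomp Require Import reals.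
From mathcomp Require Export complex.
Set Implicit Arguments. Unset Strict Implicit. Unset Printing Implicit Defensive.
Import Order.TTheory GRing.Theory Num.Theory.
Local Open Scope ring_scope.

(* Formal power series over a commutative ring, as ordinary coefficient
   sequences: u n is the coefficient of x^n. *)
Section Series.
Variable K : comRingType.

Definition series := nat -> K.

Definition sone : series := fun n => (n == 0)%:R.
Definition sid : series := fun n => (n == 1)%:R.
Definition smul (u v : series) : series :=
  fun n => \sum_(i < n.+1) u i * v (n - i)%N.
Definition spow (u : series) (k : nat) : series := iter k (smul u) sone.
(* composition g(f(x)), meaningful when f 0 = 0 *)
Definition scomp (g f : series) : series :=
  fun n => \sum_(k < n.+1) g k * spow f k n.
End Series.

Section Bell.
Variable K : fieldType.

(* f(x) = sum_{n>=1} a_n x^n / n! : ordinary coefficients (a_0 is ignored) *)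
Definition fser (a : nat -> K) : series K :=
  fun n => if n == 0%N then 0 else a n / (n`!)%:R.

Definition fiter (a : nat -> K) (s : nat) : series K :=
  iter s (fun g => scomp (fser a) g) (sid K).

(* [n k]_{phi^s} : f^s(x)^k / k! = sum_n [n k]_{phi^s} x^n / n! *)
Definition bellphi (a : nat -> K) (s n k : nat) : K :=
  (n`!)%:R * spow (fiter a s) k n / (k`!)%:R.
End Bell.

(* Main.v *)
Require Import Defs.
From mathcomp Require Import all_boot all_order all_algebra.
From mathcomp Require Import zify ring lra.
From mathcomp Require Import reals complex.
Import Order.TTheory GRing.Theory Num.Theory.
Set Implicit Arguments. Unset Strict Implicit. Unset Printing Implicit Defensive.
Local Open Scope ring_scope.

Section Analytic.
Variable K : numFieldType.

Definition eqt N (u : series K) (P : {poly K}) := forall i, (i <= N)%N -> u i = P`_i.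

Lemma eqt_mul N u v P Q : eqt N u P -> eqt N v Q -> eqt N (smul u v) (P * Q).
Proof.
move=> hu hv i hi; rewrite /smul coefM; apply: eq_bigr => j _.
rewrite hu ?hv //; last by apply: leq_trans hi; rewrite -ltnS.
by apply: leq_trans hi; apply: leq_subr.
Qed.

Lemma eqt_one N : eqt N (sone K) 1.
Proof. by move=> i _; rewrite coef1. Qed.

Lemma spowS (u : series K) k : spow u k.+1 = smul u (spow u k).
Proof. by []. Qed.

Lemma eqt_pow N u P k : eqt N u P -> eqt N (spow u k) (P ^+ k).
Proof.
move=> hu; elim: k => [|k IH]; first by rewrite expr0; apply: eqt_one.
by rewrite spowS exprS; apply: eqt_mul.
Qed.

Lemma spow_small (u : series K) k m : u 0%N = 0 -> (m < k)%N -> spow u k m = 0.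
Proof.
move=> u0; elim: k m => [|k IH] m // hm.
rewrite spowS /smul big1 // => [[i hi]] _ /=.
case: i hi => [|i] hi; first by rewrite u0 mul0r.
rewrite IH ?mulr0 //; rewrite ltnS in hi; lia.
Qed.

Lemma sum_ext0 n m (H : nat -> K) : (n <= m)%N ->
  (forall k, (n <= k)%N -> (k < m)%N -> H k = 0) ->
  \sum_(k < m) H k = \sum_(k < n) H k.
Proof.
move=> nm h; rewrite -!(big_mkord xpredT) (big_cat_nat (leq0n n) nm) /=.
rewrite [X in _ + X]big1_seq ?addr0 // => k /andP[_]; rewrite mem_index_iota => /andP[].
exact: h.
Qed.

Lemma eqt_comp N g f G F : f 0%N = 0 -> eqt N g G -> eqt N f F ->
  eqt N (scomp g f) (G \Po F).
Proof.
move=> f0 hg hf i hi; rewrite /scomp coef_comp_poly.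
have hz : forall k, (i < k)%N -> (F ^+ k)`_i = 0.
  by move=> k hk; rewrite -(eqt_pow k hf) // spow_small.
rewrite (@sum_ext0 (minn (size G) i.+1) (size G) (fun k => G`_k * (F ^+ k)`_i)) ?geq_minl //; last first.
  move=> k; rewrite geq_min => /orP[hk|hk] _.
    by rewrite nth_default // mul0r.
  by rewrite hz ?mulr0.
rewrite (@sum_ext0 (minn (size G) i.+1) i.+1 (fun k => g k * spow f k i)) ?geq_minr //; last first.
  move=> k; rewrite geq_min => /orP[hk|hk] hk2; last by lia.
  by rewrite hg ?nth_default ?mul0r //; lia.
apply: eq_bigr => k _; rewrite hg; last by have := ltn_ord k; rewrite leq_min; lia.
by rewrite (eqt_pow k hf).
Qed.

Definition trunc N (u : series K) : {poly K} := \poly_(i < N.+1) u i.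

Lemma eqt_trunc N u : eqt N u (trunc N u).
Proof. by move=> i hi; rewrite coef_poly ltnS hi. Qed.

Lemma comp_polyXn (p q : {poly K}) k : (p ^+ k) \Po q = (p \Po q) ^+ k.
Proof.
elim: k => [|k IH]; first by rewrite !expr0 (comp_poly_multiplicative q).2.
by rewrite !exprS comp_polyM IH.
Qed.

Lemma KL (g f : series K) k n : f 0%N = 0 ->
  spow (scomp g f) k n = scomp (spow g k) f n.
Proof.
move=> f0.
have hg := @eqt_trunc n g; have hf := @eqt_trunc n f.
have h1 := eqt_pow k (eqt_comp f0 hg hf).
have h2 := eqt_comp f0 (eqt_pow k hg) hf.
by rewrite h1 // h2 // comp_polyXn.
Qed.

Lemma spow_sid k n : spow (sid K) k n = (n == k)%:R.
Proof.
have h : eqt n (sid K) 'X by move=> i _; rewrite coefX.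
by rewrite (eqt_pow k h) // coefXn.
Qed.

Lemma scomp_sid (u : series K) n : scomp u (sid K) n = u n.
Proof.
rewrite /scomp (bigD1 (ord_max)) //= spow_sid eqxx mulr1 big1 ?addr0 //.
move=> i hi; rewrite spow_sid; case: eqP => [e|]; last by rewrite mulr0.
by case/eqP: hi; apply: val_inj; rewrite /= -e.
Qed.

Variable a : nat -> K.

Lemma fser0 : fser a 0%N = 0.
Proof. by rewrite /fser eqxx. Qed.

Lemma fiterS s : fiter a s.+1 = scomp (fser a) (fiter a s).
Proof. by rewrite /fiter iterS. Qed.

Lemma fiter0 s : fiter a s 0%N = 0.
Proof.
case: s => [|s]; first by [].
by rewrite fiterS /scomp big_ord1 fser0 mul0r.
Qed.

Lemma spow_fiter1 k m : spow (fiter a 1) k m = spow (fser a) k m.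
Proof.
by rewrite fiterS KL // scomp_sid.
Qed.

Lemma fact_neq0 n : (n`!)%:R != 0 :> K.
Proof. by rewrite pnatr_eq0 -lt0n fact_gt0. Qed.

Lemma bell0 n k : bellphi a 0 n k = (n == k)%:R.
Proof.
rewrite /bellphi /= spow_sid; case: eqP => [->|_]; last by rewrite mulr0 mul0r.
by rewrite mulr1 mulfV // fact_neq0.
Qed.

Lemma bellS s n k : bellphi a s.+1 n k =
  \sum_(m < n.+1) bellphi a s n m * bellphi a 1 m k.
Proof.
rewrite /bellphi fiterS KL ?fiter0 // /scomp mulr_sumr mulr_suml.
apply: eq_bigr => m _; rewrite spow_fiter1.
have := fact_neq0 m; have := fact_neq0 k; have := fact_neq0 n.
move=> h1 h2 h3; field.
by rewrite h2 h3.
Qed.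

Lemma bell1_small m k : (m < k)%N -> bellphi a 1 m k = 0.
Proof.
by move=> h; rewrite /bellphi spow_fiter1 spow_small ?fser0 // mulr0 mul0r.
Qed.

Lemma spow_diag k : spow (fser a) k k = (a 1%N) ^+ k.
Proof.
elim: k => [|k IH]; first by rewrite /spow /= /sone eqxx.
rewrite spowS /smul big_ord_recl fser0 mul0r add0r.
rewrite (bigD1 ord0) //= subSS subn0 IH big1 ?addr0; last first.
  move=> i hi; rewrite spow_small ?fser0 ?mulr0 //.
  have : (0 < i)%N by rewrite lt0n; apply/eqP => e; case/eqP: hi; apply: val_inj.
  rewrite /bump /=; have := ltn_ord i; lia.
by rewrite exprS /fser /= divr1.
Qed.

Lemma bell1_diag k : bellphi a 1 k k = (a 1%N) ^+ k.
Proof.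
rewrite /bellphi spow_fiter1 spow_diag mulrC mulrA mulVf ?mul1r //.
exact: fact_neq0.
Qed.

End Analytic.

Section Ffun.
Variable K : numFieldType.

Definition fcons (A : finType) p (a : A) (g : {ffun 'I_p -> A}) : {ffun 'I_p.+1 -> A} :=
  [ffun i : 'I_p.+1 => if unlift ord0 i is Some j then g j else a].

Lemma fcons0 (A : finType) p (a : A) (g : {ffun 'I_p -> A}) : fcons a g ord0 = a.
Proof. by rewrite /fcons ffunE unlift_none. Qed.

Lemma fconsL (A : finType) p (a : A) (g : {ffun 'I_p -> A}) i : fcons a g (lift ord0 i) = g i.
Proof. by rewrite /fcons ffunE liftK. Qed.

Lemma sum_ffunS (A : finType) p (F : {ffun 'I_p.+1 -> A} -> K) :
  \sum_f F f = \sum_(a : A) \sum_(g : {ffun 'I_p -> A}) F (fcons a g).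
Proof.
rewrite pair_bigA /= (reindex (fun x : A * {ffun 'I_p -> A} => fcons x.1 x.2)) //.
apply: onW_bij.
exists (fun f : {ffun 'I_p.+1 -> A} => (f ord0, [ffun i => f (lift ord0 i)])).
  case=> a g /=; rewrite fcons0; congr pair; apply/ffunP => i.
  by rewrite ffunE fconsL.
move=> f /=; apply/ffunP => i; rewrite /fcons ffunE.
case: (unliftP ord0 i) => [j ->|->] //.
by rewrite ffunE.
Qed.

Lemma sum_ffun0 (A : finType) (F : {ffun 'I_0 -> A} -> K) g0 :
  \sum_g F g = F g0.
Proof.
apply: big_pred1 => g /=; apply/esym/eqP/ffunP => -[i hi] //.
Qed.

Lemma sum_ord_eq n k (F : 'I_n.+1 -> K) :
  (forall a : 'I_n.+1, nat_of_ord a != k -> F a = 0) ->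
  \sum_a F a = if (k < n.+1)%N then F (inord k) else 0.
Proof.
move=> h; case: ifP => hk.
  rewrite (bigD1 (inord k)) //= big1 ?addr0 // => i hi; apply: h.
  by apply: contra hi => /eqP e; apply/eqP/val_inj; rewrite /= inordK.
rewrite big1 // => i _; apply: h; apply/eqP => e; move: hk; rewrite -e ltn_ord.
by [].
Qed.

Definition incr p N (j : {ffun 'I_p -> 'I_N}) :=
  [forall i1 : 'I_p, forall i2 : 'I_p, (i1 < i2)%N ==> (j i1 < j i2)%N].

Lemma incr_cons p N (a : 'I_N) (g : {ffun 'I_p.+1 -> 'I_N}) :
  incr (fcons a g) = (a < g ord0)%N && incr g.
Proof.
apply/idP/idP.
  move=> /forallP H; apply/andP; split.
    have := H ord0 => /forallP /(_ (lift ord0 ord0)) /implyP.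
    by rewrite fcons0 fconsL; apply.
  apply/forallP => i1; apply/forallP => i2; apply/implyP => hi.
  have := H (lift ord0 i1) => /forallP /(_ (lift ord0 i2)) /implyP.
  by rewrite !fconsL; apply.
case/andP => ha /forallP H.
have hg0 : forall j, (g ord0 <= g j)%N.
  move=> j; case: (eqVneq j ord0) => [->//|hj].
  have := H ord0 => /forallP /(_ j) /implyP; rewrite lt0n.
  move=> h; apply: ltnW; apply: h; apply: contra hj => /eqP e.
  by apply/eqP/val_inj.
apply/forallP => i1; apply/forallP => i2; apply/implyP.
case: (unliftP ord0 i1) => [j1 ->|->]; case: (unliftP ord0 i2) => [j2 ->|->] //=.
- rewrite !fconsL /bump /= !add1n ltnS => h.
  by have := H j1 => /forallP /(_ j2) /implyP; apply.
- rewrite fcons0 fconsL => _; exact: leq_trans ha (hg0 j2).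
Qed.

End Ffun.

Section Comb.
Variable K : numFieldType.
Variable q : K.
Variable T : nat -> nat -> K.

Fixpoint Frec (p r n k : nat) : K :=
  match p with
  | 0 => (n == k)%:R * q ^+ (k * r)%N
  | p'.+1 => \sum_(m < n.+1 | (k < m)%N) \sum_(t < r.+1)
               q ^+ (k * t)%N * Frec p' (r - t)%N n m * T m k
  end.

Lemma Frec_zero p r n k : (n < k + p)%N -> Frec p r n k = 0.
Proof.
elim: p r n k => [|p IH] r n k h /=.
  by rewrite addn0 in h; rewrite (ltn_eqF h) mul0r.
rewrite big1 // => m hm; rewrite big1 // => t _.
by rewrite IH ?mulr0 ?mul0r //; have := ltn_ord m; lia.
Qed.

Lemma Frec_unf p r n k : (0 < p + r)%N ->
  Frec p r n k = (if r is r'.+1 then q ^+ k * Frec p r' n k else 0)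
    + (if p is p'.+1 then \sum_(m < n.+1 | (k < m)%N) Frec p' r n m * T m k else 0).
Proof.
case: p => [|p]; case: r => [|r] //= _.
- by rewrite addr0 mulrCA -exprD mulnS.
- rewrite add0r; apply: eq_bigr => m _; rewrite big_ord1 muln0 expr0 mul1r subn0 //.
- rewrite mulr_sumr -big_split /=; apply: eq_bigr => m _.
  rewrite big_ord_recl /= muln0 expr0 mul1r subn0 addrC; congr (_ + _).
  rewrite mulr_sumr; apply: eq_bigr => t _ /=.
  by rewrite /bump /= add1n subSS mulnS exprD !mulrA.
Qed.

Definition S s n k := \sum_(p < s.+1) Frec p (s - p)%N n k.

Lemma S_rec s n k : S s.+1 n k =
  q ^+ k * S s n k + \sum_(m < n.+1 | (k < m)%N) S s n m * T m k.
Proof.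
rewrite /S.
transitivity (\sum_(p < s.+2) ((if (p < s.+1)%N then q ^+ k * Frec p (s - p)%N n k else 0)
   + (if nat_of_ord p is p'.+1 then \sum_(m < n.+1 | (k < m)%N) Frec p' (s - p')%N n m * T m k else 0))).
  apply: eq_bigr => -[p hp] _ /=.
  rewrite Frec_unf; last by lia.
  congr (_ + _).
    case: p hp => [|p] hp; first by rewrite !subn0.
    case e: (s.+1 - p.+1)%N => [|r].
      by rewrite ifF //; lia.
    by rewrite ifT; [congr (_ * Frec _ _ _ _); lia | lia].
  by case: p hp => [|p] hp //=; rewrite subSS.
rewrite big_split /= [X in X + _]big_ord_recr [X in _ + X]big_ord_recl /= ltnn addr0 add0r.
congr (_ + _).
  rewrite mulr_sumr; apply: eq_bigr => -[p hp] _ /=; by rewrite hp.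
rewrite exchange_big /=; apply: eq_bigr => m _; rewrite mulr_suml.
by apply: eq_bigr => i _.
Qed.

End Comb.

Section Chain.
Variable K : numFieldType.
Variable q : K.
Variable T : nat -> nat -> K.

Definition Lsum p r M (x : 'I_p.+1 -> nat) : K :=
  \sum_(lam : {ffun 'I_p.+1 -> 'I_M} | (\sum_(i < p.+1) nat_of_ord (lam i))%N == r)
     q ^+ (\sum_(i < p.+1) x i * lam i)%N.
Arguments Lsum : clear implicits.

Lemma Lsum_ext p r M x y : x =1 y -> Lsum p r M x = Lsum p r M y.
Proof.
move=> h; apply: eq_bigr => lam _; congr (_ ^+ _); apply: eq_bigr => i _.
by rewrite h.
Qed.

Lemma Lsum0 r M x : (r < M)%N -> Lsum 0 r M x = q ^+ (x ord0 * r).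
Proof.
case: M => [//|M] hr.
rewrite /Lsum big_mkcond sum_ffunS /=.
rewrite (sum_ord_eq (k:=r)) ?hr.
  rewrite (sum_ffun0 _ [ffun i => inord r]) !big_ord1 fcons0 inordK // eqxx.
  by [].
move=> t ht; rewrite (sum_ffun0 _ [ffun i => t]) !big_ord1 fcons0 ifF //.
exact/negbTE.
Qed.

Lemma LsumS p r M x : (r < M)%N ->
  Lsum p.+1 r M x = \sum_(t < r.+1) q ^+ (x ord0 * t)%N *
                      Lsum p (r - t)%N M (fun i => x (lift ord0 i)).
Proof.
move=> hr.
rewrite [LHS]/Lsum big_mkcond sum_ffunS /=.
rewrite (big_ord_widen M (fun t : nat => q ^+ (x ord0 * t)%N *
   Lsum p (r - t)%N M (fun i => x (lift ord0 i)))) //.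
rewrite /Lsum.
rewrite [RHS]big_mkcond; apply: eq_bigr => t _.
case: ifP => ht.
  rewrite mulr_sumr [RHS]big_mkcond; apply: eq_bigr => g _.
  rewrite [X in X == r]big_ord_recl [X in q ^+ X]big_ord_recl !fcons0.
  under eq_bigr do rewrite fconsL.
  under [in X in _ ^+ X]eq_bigr do rewrite fconsL.
  have -> : ((t + \sum_(i < p.+1) g i)%N == r) = ((\sum_(i < p.+1) g i)%N == (r - t)%N).
    by apply/eqP/eqP; lia.
  by case: ifP => _; rewrite ?mulr0 // exprD.
rewrite big1 // => g _; rewrite big_ord_recl fcons0 ifF //.
by apply/negbTE; apply/eqP; lia.
Qed.

Definition Pj p n (j : {ffun 'I_p.+1 -> 'I_n.+1}) : K :=
  \prod_(i < p) T (j (lift ord0 i)) (j (widen_ord (leqnSn p) i)).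

Lemma incr1 N (j : {ffun 'I_1 -> 'I_N}) : incr j.
Proof.
apply/forallP => -[[|?] ?] //; apply/forallP => -[[|?] ?] //.
Qed.

Lemma Pj_cons p n (a : 'I_n.+1) (g : {ffun 'I_p.+1 -> 'I_n.+1}) :
  Pj (fcons a g) = T (g ord0) a * Pj g.
Proof.
rewrite /Pj big_ord_recl fconsL.
have -> : widen_ord (leqnSn p.+1) ord0 = ord0 by apply: val_inj.
rewrite fcons0; congr (_ * _); apply: eq_bigr => i _.
have -> : widen_ord (leqnSn p.+1) (lift ord0 i) = lift ord0 (widen_ord (leqnSn p) i).
  by apply: val_inj.
by rewrite !fconsL.
Qed.

Lemma chain_sum (p r M n k : nat) : (r < M)%N ->
  \sum_(j : {ffun 'I_p.+1 -> 'I_n.+1} |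
      [&& nat_of_ord (j ord0) == k, nat_of_ord (j ord_max) == n & incr j])
     Lsum p r M (fun i => j i) * Pj j
  = Frec q T p r n k.
Proof.
elim: p r k => [|p IH] r k hr.
  rewrite big_mkcond sum_ffunS /=.
  rewrite (sum_ord_eq (k:=n)).
    rewrite ltnSn (sum_ffun0 _ [ffun i => inord n]) incr1 fcons0 andbT.
    have -> : (ord_max : 'I_1) = ord0 by apply: val_inj.
    rewrite fcons0 inordK // eqxx andbT Lsum0 // fcons0 inordK // /Pj big_ord0 mulr1.
    by case: eqP => [->|]; rewrite ?mul1r ?mul0r.
  move=> a ha; rewrite (sum_ffun0 _ [ffun i => a]).
  have -> : (ord_max : 'I_1) = ord0 by apply: val_inj.
  by rewrite fcons0 (negbTE ha) andbF.
case: (ltnP k n.+1) => hk; last first.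
  rewrite Frec_zero; last by lia.
  rewrite big1 // => j /andP[/eqP e _]; move: (ltn_ord (j ord0)); rewrite e => h; exfalso; lia.
rewrite big_mkcond sum_ffunS (sum_ord_eq (k:=k)); last first.
  move=> a ha; apply: big1 => g _.
  by rewrite fcons0 (negbTE ha).
rewrite hk.
transitivity (\sum_(g : {ffun 'I_p.+1 -> 'I_n.+1})
   (if [&& nat_of_ord (g ord_max) == n, (k < g ord0)%N & incr g]
    then \sum_(t < r.+1) q ^+ (k * t)%N * (Lsum p (r - t)%N M (fun i => g i) * Pj g) * T (g ord0) k
    else 0)).
  apply: eq_bigr => g _.
  have -> : (ord_max : 'I_p.+2) = lift ord0 ord_max by apply: val_inj.
  rewrite fcons0 fconsL inordK // eqxx incr_cons /= inordK //.
  case: ifP => // _.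
  rewrite LsumS // Pj_cons fcons0 inordK // mulr_suml; apply: eq_bigr => t _.
  have E : (fun i => nat_of_ord (fcons (inord k) g (lift ord0 i))) =1 (fun i => nat_of_ord (g i)).
    by move=> i; rewrite fconsL.
  rewrite (Lsum_ext _ _ E).
  ring.
symmetry; rewrite /=.
transitivity (\sum_(m < n.+1) \sum_(g : {ffun 'I_p.+1 -> 'I_n.+1})
   (if (k < m)%N && [&& nat_of_ord (g ord0) == m, nat_of_ord (g ord_max) == n & incr g]
    then \sum_(t < r.+1) q ^+ (k * t)%N * (Lsum p (r - t)%N M (fun i => g i) * Pj g) * T m k
    else 0)).
  rewrite big_mkcond; apply: eq_bigr => m _; case: ifP => hkm /=; last by rewrite big1.
  under eq_bigr => t _ do rewrite -(IH _ _ (leq_ltn_trans (leq_subr t r) hr)) mulr_sumr mulr_suml.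
  rewrite exchange_big /= big_mkcond; apply: eq_bigr => g _.
  by case: ifP.
rewrite exchange_big /=; apply: eq_bigr => g _.
rewrite (sum_ord_eq (k := g ord0)).
  rewrite ltn_ord inordK ?ltn_ord // eqxx /=.
  by case: (k < g ord0)%N; case: (nat_of_ord (g ord_max) == n); case: (incr g).
move=> m hm; rewrite ifF //; apply/negbTE.
by rewrite eq_sym (negbTE hm) andbF.
Qed.

End Chain.

Unset Implicit Arguments.

Section Final.
Variable R : realType.
Variable a : nat -> R[i].

Lemma bell_S s n k : bellphi a s n k = S (a 1%N) (bellphi a 1) s n k.
Proof.
elim: s n k => [|s IH] n k.
  by rewrite bell0 /S big_ord1 /= muln0 expr0 mulr1.
rewrite bellS S_rec.
under eq_bigr do rewrite IH.
rewrite (bigID (fun m : 'I_n.+1 => (k < m)%N)) /= addrC; congr (_ + _).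
rewrite big_mkcond /= (sum_ord_eq (k:=k)); last first.
  move=> m hm; case: ifP => // hkm; rewrite bell1_small ?mulr0 //.
  by move: hm hkm; rewrite -ltnNge; lia.
case: ifP => hk.
  by rewrite inordK // ltnn /= bell1_diag mulrC.
rewrite /S big1 ?mulr0 // => p _; rewrite Frec_zero //.
by move/negbT: hk; rewrite -leqNgt; lia.
Qed.

End Final.

Theorem mainTheorem3 (R : realType) (a : nat -> R[i]) (s n k : nat) :
  a 1%N != 0 -> (k <= n)%N ->
  bellphi a s n k =
  \sum_(p < (minn s (n - k)).+1)
    \sum_(j : {ffun 'I_p.+1 -> 'I_n.+1} |
            [&& nat_of_ord (j ord0) == k, nat_of_ord (j ord_max) == n &
                [forall i1 : 'I_p.+1, forall i2 : 'I_p.+1,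
                   (i1 < i2)%N ==> (j i1 < j i2)%N]])
      ((\sum_(lam : {ffun 'I_p.+1 -> 'I_(s - p).+1} |
                (\sum_(i < p.+1) nat_of_ord (lam i))%N == (s - p)%N)
           (a 1%N) ^+ (\sum_(i < p.+1) j i * lam i)%N)
       * \prod_(i < p) bellphi a 1 (j (lift ord0 i)) (j (widen_ord (leqnSn p) i))).
Proof.
move=> _ hkn.
rewrite bell_S /S.
rewrite (@sum_ext0 _ (minn s (n - k)).+1 s.+1 (fun p => Frec (a 1%N) (bellphi a 1) p (s - p)%N n k)); last first.
  move=> p hp hps; rewrite Frec_zero //.
  move: hp; rewrite gtn_min => /orP[h|h]; lia.
  by rewrite ltnS geq_minl.
apply: eq_bigr => p _.
rewrite -(chain_sum (a 1%N) (bellphi a 1) p n k (ltnSn (s - p)%N)).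
by apply: eq_bigr.
Qed.
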